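(* Let $A\in\mathbb{R}^{m\times n}$, $G:\mathbb{R}^k\to\mathbb{R}^n$, $\epsilon_{\max}\ge0$, let $l$ be a positive integer and $C_0,C_1,\delta,t\ge0$. (i) (Sufficiency.) Suppose that for all $\eta\in T_A(2\epsilon_{\max})$, $$\|\eta\|_2\le\frac{C_0}{2}l^{-t}\sigma_{2l,G'}(\eta)+C_1\epsilon_{\max}+\delta.$$ Then the decoder $\Delta(y)=\arg\min_{x:\|Ax-y\|_2\le\epsilon_{\max}}\sigma_{l,G}(x)$ satisfies, for all $x\in\mathbb{R}^n$ and all $\epsilon$ with $\|\epsilon\|_2\le\epsilon_{\max}$, $$\|x-\Delta(Ax+\epsilon)\|_2\le C_0l^{-t}\sigma_{l,G}(x)+C_1\epsilon_{\max}+\delta.$$ (ii) (Necessity.) Conversely, if some decoder $\Delta:\mathbb{R}^m\to\mathbb{R}^n$ satisfies $\|x-\Delta(Ax+\epsilon)\|_2\le C_0l^{-t}\sigma_{l,G}(x)+C_1\epsilon_{\max}+\delta$ for all $x\in\mathbb{R}^n$ and all $\|\epsilon\|_2\le\epsilon_{\max}$, then for all $\eta\in T_A(\epsilon_{\max})$, $$\|\eta\|_2\le C_0l^{-t}\sigma_{2l,G'}(\eta)+2C_1\epsilon_{\max}+2\delta.$$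
   Context: For $v\in\mathbb{R}^n$ and $s\ge0$, $S_s(v)=\{x\in\mathbb{R}^n:\|x-v\|_0\le s\}$ ($\|\cdot\|_0$ counts nonzero coordinates), and $S_s=S_s(0)$. For a function $H$ with domain $D$, $S_{s,H}=\bigcup_{w\in D}S_s(H(w))$ and $\sigma_{s,H}(x)=\inf_{\hat x\in S_{s,H}}\|x-\hat x\|_1$. The difference function $G':\mathbb{R}^k\times\mathbb{R}^k\to\mathbb{R}^n$ is $G'(z_1,z_2)=G(z_1)-G(z_2)$, so $S_{s,G'}=\{G(z_1)-G(z_2)+\nu: z_1,z_2\in\mathbb{R}^k,\ \nu\in S_s\}$. The $\epsilon$-tube of $A$ is $T_A(\epsilon)=\{w\in\mathbb{R}^n:\|Aw\|_2\le\epsilon\}$. *)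

(* Defs.v *)
From Stdlib Require Import Reals ClassicalEpsilon.
From mathcomp Require Import ssreflect ssrfun ssrbool eqtype ssrnat seq fintype bigop.

Set Implicit Arguments.
Unset Strict Implicit.
Unset Printing Implicit Defensive.

Local Open Scope R_scope.

Definition vec (n : nat) := 'I_n -> R.
Definition mat (m n : nat) := 'I_m -> 'I_n -> R.

Definition vadd n (x y : vec n) : vec n := fun i => x i + y i.
Definition vsub n (x y : vec n) : vec n := fun i => x i - y i.
Definition mulv m n (A : mat m n) (x : vec n) : vec m :=
  fun i => \big[Rplus/0]_(j < n) (A i j * x j).

Definition norm1 n (x : vec n) : R := \big[Rplus/0]_(i < n) Rabs (x i).
Definition norm2 n (x : vec n) : R := sqrt (\big[Rplus/0]_(i < n) (x i * x i)).
Definition norm0 n (x : vec n) : nat :=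
  #|[pred i : 'I_n | if Req_EM_T (x i) 0 then false else true]|.

Definition in_S n (s : nat) (v x : vec n) : Prop := (norm0 (vsub x v) <= s)%nat.
Definition in_SH (D : Type) n (s : nat) (H : D -> vec n) (x : vec n) : Prop :=
  exists w : D, in_S s (H w) x.

Definition is_glb (E : R -> Prop) (r : R) : Prop :=
  (forall e, E e -> r <= e) /\ (forall b, (forall e, E e -> b <= e) -> b <= r).
Definition Rinf (E : R -> Prop) : R := epsilon (inhabits 0) (is_glb E).

Definition sigma_sG (D : Type) n (s : nat) (H : D -> vec n) (x : vec n) : R :=
  Rinf (fun r => exists xhat, in_SH s H xhat /\ r = norm1 (vsub x xhat)).

Definition Gdiff k n (G : vec k -> vec n) : vec k * vec k -> vec n :=
  fun p => vsub (G p.1) (G p.2).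

Definition in_tube m n (A : mat m n) (eps : R) (w : vec n) : Prop :=
  norm2 (mulv A w) <= eps.

(* Main.v *)
Require Import Defs.
From Stdlib Require Import Reals Lra Psatz ClassicalEpsilon FunctionalExtensionality.
From mathcomp Require Import ssreflect ssrfun ssrbool eqtype ssrnat seq fintype bigop.
From mathcomp Require Import zify.
Local Open Scope R_scope.

Lemma sum_nonneg (I : Type) (r : seq I) (F : I -> R) :
  (forall i, 0 <= F i) -> 0 <= \big[Rplus/0]_(i <- r) F i.
Proof. move=> H; elim: r => [|a r IH]; rewrite ?big_nil ?big_cons; [lra|]. have := H a; lra. Qed.

Lemma sum_le (I : Type) (r : seq I) (F H : I -> R) :
  (forall i, F i <= H i) -> \big[Rplus/0]_(i <- r) F i <= \big[Rplus/0]_(i <- r) H i.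
Proof. move=> Hf; elim: r => [|a r IH]; rewrite ?big_nil ?big_cons; [lra|]. have := Hf a; lra. Qed.

Lemma sum_add (I : Type) (r : seq I) (F H : I -> R) :
  \big[Rplus/0]_(i <- r) (F i + H i) = \big[Rplus/0]_(i <- r) F i + \big[Rplus/0]_(i <- r) H i.
Proof. elim: r => [|a r IH]; rewrite ?big_nil ?big_cons; [lra|]. rewrite IH; lra. Qed.

Lemma sum_scal (I : Type) (r : seq I) (F : I -> R) c :
  \big[Rplus/0]_(i <- r) (c * F i) = c * \big[Rplus/0]_(i <- r) F i.
Proof. elim: r => [|a r IH]; rewrite ?big_nil ?big_cons; [lra|]. rewrite IH; lra. Qed.

Lemma sum_ext (I : Type) (r : seq I) (F H : I -> R) :
  (forall i, F i = H i) -> \big[Rplus/0]_(i <- r) F i = \big[Rplus/0]_(i <- r) H i.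
Proof. move=> Hf; elim: r => [|a r IH]; rewrite ?big_nil ?big_cons; [lra|]. rewrite IH Hf; lra. Qed.

Lemma CS_list (I : Type) (r : seq I) (x y : I -> R) :
  (\big[Rplus/0]_(i <- r) (x i * y i)) ^ 2 <=
  (\big[Rplus/0]_(i <- r) (x i * x i)) * (\big[Rplus/0]_(i <- r) (y i * y i)).
Proof.
elim: r => [|a r IH]; rewrite ?big_nil ?big_cons; [lra|].
set S := \big[Rplus/0]_(i <- r) (x i * y i) in IH *.
set X := \big[Rplus/0]_(i <- r) (x i * x i) in IH *.
set Y := \big[Rplus/0]_(i <- r) (y i * y i) in IH *.
have HX : 0 <= X by apply: sum_nonneg => i; nra.
have HY : 0 <= Y by apply: sum_nonneg => i; nra.
suff : 2 * S * (x a * y a) <= X * (y a * y a) + (x a * x a) * Y by nra.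
case: (Req_dec X 0) => HX0.
- have -> : S = 0 by nra. rewrite HX0; nra.
- have HXp : 0 < X by lra.
  have : 0 <= X * (X * (y a * y a) + x a * x a * Y - 2 * S * (x a * y a)).
  { have E : X * (X * (y a * y a) + x a * x a * Y - 2 * S * (x a * y a)) =
      (X * y a - S * x a) ^ 2 + (x a * x a) * (X * Y - S ^ 2) by ring.
    rewrite E. apply: Rplus_le_le_0_compat; first exact: pow2_ge_0.
    apply: Rmult_le_pos; nra. }
  move=> H.
  have : 0 <= (X * (y a * y a) + x a * x a * Y - 2 * S * (x a * y a)).
  { apply: (Rmult_le_reg_l X); lra. }
  lra.
Qed.

Lemma CS_sqrt (I : Type) (r : seq I) (x y : I -> R) :
  \big[Rplus/0]_(i <- r) (x i * y i) <=
  sqrt (\big[Rplus/0]_(i <- r) (x i * x i)) * sqrt (\big[Rplus/0]_(i <- r) (y i * y i)).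
Proof.
rewrite -sqrt_mult; try (apply: sum_nonneg => i; nra).
apply: Rle_trans (Rle_abs _) _.
rewrite -sqrt_Rsqr_abs. apply: sqrt_le_1_alt. rewrite /Rsqr.
have := @CS_list _ r x y. lra.
Qed.

Lemma norm2_ge0 n (x : vec n) : 0 <= norm2 x.
Proof. exact: sqrt_pos. Qed.

Lemma norm2_tri n (u v : vec n) : norm2 (vadd u v) <= norm2 u + norm2 v.
Proof.
rewrite /norm2 /vadd.
set X := \big[Rplus/0]_(i < n) (u i * u i).
set Y := \big[Rplus/0]_(i < n) (v i * v i).
have HX : 0 <= X by apply: sum_nonneg => i; nra.
have HY : 0 <= Y by apply: sum_nonneg => i; nra.
have E : \big[Rplus/0]_(i < n) ((u i + v i) * (u i + v i)) =
   X + Y + 2 * \big[Rplus/0]_(i < n) (u i * v i).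
{ rewrite /X /Y -sum_scal -!sum_add. apply: sum_ext => i; ring. }
rewrite E.
have CS : \big[Rplus/0]_(i < n) (u i * v i) <= sqrt X * sqrt Y := @CS_sqrt _ _ u v.
have sX := sqrt_pos X. have sY := sqrt_pos Y.
have sqX := sqrt_sqrt X HX. have sqY := sqrt_sqrt Y HY.
rewrite -(sqrt_Rsqr (sqrt X + sqrt Y)); last lra.
apply: sqrt_le_1_alt. rewrite /Rsqr. clearbody X Y. nra.
Qed.

Lemma norm2_ext n (u v : vec n) : (forall i, u i = v i) -> norm2 u = norm2 v.
Proof. move=> H; rewrite /norm2; congr sqrt; apply: sum_ext => i; rewrite H. done. Qed.

Lemma norm2_opp n (u : vec n) : norm2 (fun i => - u i) = norm2 u.
Proof. rewrite /norm2; congr sqrt; apply: sum_ext => i; ring. Qed.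

Lemma norm2_sub n (u v : vec n) : norm2 (vsub u v) <= norm2 u + norm2 v.
Proof.
rewrite (@norm2_ext _ _ (vadd u (fun i => - v i))); last by move=> i; rewrite /vsub /vadd; ring.
rewrite -(@norm2_opp _ v). exact: norm2_tri.
Qed.

Lemma norm2_subC n (u v : vec n) : norm2 (vsub u v) = norm2 (vsub v u).
Proof. rewrite -norm2_opp; apply: norm2_ext => i; rewrite /vsub; ring. Qed.

Lemma norm1_ge0 n (x : vec n) : 0 <= norm1 x.
Proof. apply: sum_nonneg => i; exact: Rabs_pos. Qed.

Lemma norm1_ext n (u v : vec n) : (forall i, u i = v i) -> norm1 u = norm1 v.
Proof. move=> H; apply: sum_ext => i; rewrite H. done. Qed.

Lemma norm1_tri n (u v : vec n) : norm1 (vadd u v) <= norm1 u + norm1 v.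
Proof. rewrite /norm1 -sum_add; apply: sum_le => i; exact: Rabs_triang. Qed.

Lemma norm1_0 n (u : vec n) : norm1 (vsub u u) = 0.
Proof.
rewrite /norm1 (@sum_ext _ _ _ (fun _ => 0)); last by move=> i; rewrite /vsub Rminus_diag Rabs_R0.
elim: (index_enum _) => [|a r IH]; rewrite ?big_nil ?big_cons //; lra.
Qed.

Lemma mulv_sub m n (A : mat m n) (x y : vec n) i :
  mulv A (vsub x y) i = mulv A x i - mulv A y i.
Proof.
rewrite /mulv.
have -> : \big[Rplus/0]_(j < n) (A i j * vsub x y j) =
  \big[Rplus/0]_(j < n) (A i j * x j) + \big[Rplus/0]_(j < n) ((-1) * (A i j * y j)).
{ rewrite -sum_add; apply: sum_ext => j; rewrite /vsub; ring. }
rewrite sum_scal. have H : forall a b c : R, b = c -> a + -1 * b = a - c by move=> a b c ->; ring. by apply: H.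
Qed.
Set Implicit Arguments.

Lemma Rinf_spec (E : R -> Prop) : (exists r, E r) -> (forall r, E r -> 0 <= r) ->
  is_glb E (Rinf E).
Proof.
move=> [r0 Hr0] Hlb. rewrite /Rinf. apply: epsilon_spec.
have Hbd : bound (fun y => E (- y)).
{ exists 0 => y Hy. have := Hlb _ Hy. lra. }
have Hne : exists y, E (- y) by exists (- r0); rewrite Ropp_involutive.
have [M HM] := completeness (fun y => E (- y)) Hbd Hne.
exists (- M). case: HM => Hub Hl. split.
  + move=> e He. have := Hub (- e). rewrite Ropp_involutive => h. have := h He. lra.
  + move=> b Hb. have : M <= - b.
    { apply: Hl => y Hy. have := Hb _ Hy. lra. }
    lra.
Qed.

Lemma sigma_glb (D : Type) n (s : nat) (H : D -> vec n) (w0 : D) (x : vec n) :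
  is_glb (fun r => exists xhat, in_SH s H xhat /\ r = norm1 (vsub x xhat)) (sigma_sG s H x).
Proof.
apply: Rinf_spec.
- exists (norm1 (vsub x (H w0))). exists (H w0); split => //.
  exists w0. rewrite /in_S. rewrite (_ : norm0 (vsub (H w0) (H w0)) = 0%nat) //.
  rewrite /norm0. apply: eq_card0 => i. rewrite /= /vsub.
  rewrite !inE /= Rminus_diag. by case: Req_dec_T.
- move=> r [xh [_ ->]]. exact: norm1_ge0.
Qed.

Lemma sigma_le (D : Type) n (s : nat) (H : D -> vec n) (x xh : vec n) :
  in_SH s H xh -> sigma_sG s H x <= norm1 (vsub x xh).
Proof.
move=> Hx. have [w0 _] := Hx.
have [h _] := sigma_glb s H w0 x. apply: h. by exists xh.
Qed.

Lemma sigma_approx (D : Type) n (s : nat) (H : D -> vec n) (w0 : D) (x : vec n) eps :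
  0 < eps -> exists xh, in_SH s H xh /\ norm1 (vsub x xh) < sigma_sG s H x + eps.
Proof.
move=> He. have [_ h] := sigma_glb s H w0 x.
apply: NNPP => Hn. have : sigma_sG s H x + eps <= sigma_sG s H x; last lra.
apply: h => e [xh [Hxh ->]]. apply: Rnot_lt_le => Hlt. apply: Hn. by exists xh.
Qed.

Lemma approx_le a b : (forall eps, 0 < eps -> a <= b + eps) -> a <= b.
Proof.
move=> H. apply: Rnot_lt_le => Hlt. have := H ((a - b) / 2) ltac:(lra). lra.
Qed.

Lemma norm0_le_card n (u : vec n) (P : pred 'I_n) :
  (forall i, u i <> 0 -> P i) -> (norm0 u <= #|P|)%nat.
Proof.
move=> H. apply: subset_leq_card. apply/subsetP => i. rewrite !inE.
case: Req_EM_T => // h _. exact: H.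
Qed.

Lemma norm0_sub n (a b : vec n) : (norm0 (vsub a b) <= norm0 a + norm0 b)%nat.
Proof.
rewrite /norm0.
set Pa := [pred i : 'I_n | if Req_EM_T (a i) 0 then false else true].
set Pb := [pred i : 'I_n | if Req_EM_T (b i) 0 then false else true].
apply: (leq_trans (n := #|[predU Pa & Pb]|)).
- apply: (@norm0_le_card _ (vsub a b)) => i. rewrite /vsub /= => h.
  rewrite /Pa /Pb !inE /=. case: (Req_dec_T (a i) 0) => ha; case: (Req_dec_T (b i) 0) => hb //. exfalso; apply: h; rewrite ha hb; ring.
- rewrite -(cardUI Pa Pb). exact: leq_addr.
Qed.

Lemma split_sparse n (l : nat) (nu : vec n) : (norm0 nu <= 2 * l)%nat ->
  exists nu1 nu2 : vec n, (forall i, nu i = nu1 i + nu2 i) /\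
     (norm0 nu1 <= l)%nat /\ (norm0 nu2 <= l)%nat.
Proof.
move=> Hnu.
set P := [pred i : 'I_n | if Req_EM_T (nu i) 0 then false else true].
set s := enum P.
set T := take l s.
exists (fun i => if i \in T then nu i else 0), (fun i => if i \in T then 0 else nu i).
split; [move=> i; case: (i \in T); ring | split].
- apply: leq_trans (@norm0_le_card _ _ (mem T) _) _.
  + move=> i. case: ifP => [hT _ | _ h]; [exact: hT | by case: h].
  + apply: leq_trans (card_size T) _. rewrite /T size_take. case: ifP => //. lia.
- have Hnu' : (#|P| <= 2 * l)%nat by [].
  apply: leq_trans (@norm0_le_card _ _ [predD P & mem T] _) _.
  + move=> i. case: (boolP (i \in T)) => hT //= h. rewrite /= hT /=.
    rewrite /P inE /=. by case: (Req_dec_T (nu i) 0).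
  + have := cardID (mem T) P.
    have EI : #|[predI P & mem T]| = size T.
    { rewrite -(card_uniqP _); last exact/take_uniq/enum_uniq.
      apply: eq_card => i. rewrite !inE. case: (boolP (i \in T)) => hT; last by rewrite andbF.
      rewrite andbT. have : i \in s by apply: mem_take hT.
      by rewrite mem_enum. }
    rewrite EI /T size_take cardE -/s. rewrite cardE -/s in Hnu'. move: (#|[predD P & mem (take l s)]|) => c. move: (size s) Hnu' => z. case: ifP => h; lia.
Qed.
Unset Implicit Arguments.

Lemma norm1_sub n (u v : vec n) : norm1 (vsub u v) <= norm1 u + norm1 v.
Proof.
rewrite /norm1 -sum_add; apply: sum_le => i. rewrite /vsub.
have := Rabs_triang (u i) (- v i). by rewrite Rabs_Ropp.
Qed.

Lemma norm2_zero n : norm2 (fun _ : 'I_n => 0) = 0.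
Proof.
rewrite /norm2.
have -> : \big[Rplus/0]_(i < n) (0 * 0) = 0.
{ elim: (index_enum _) => [|a r IH]; rewrite ?big_nil ?big_cons; [done|]. rewrite IH; ring. }
exact: sqrt_0.
Qed.

Lemma norm0_ext n (u v : vec n) : (forall i, u i = v i) -> norm0 u = norm0 v.
Proof. move=> H; by have -> : u = v by apply: functional_extensionality. Qed.

Theorem lemma3 (m n k : nat) (A : mat m n) (G : vec k -> vec n)
  (emax : R) (l : nat) (C0 C1 delta t : R)
  (Hemax : 0 <= emax) (Hl : (0 < l)%nat)
  (HC0 : 0 <= C0) (HC1 : 0 <= C1) (Hdelta : 0 <= delta) (Ht : 0 <= t) :
  (* (i) sufficiency *)
  ((forall eta : vec n, in_tube A (2 * emax) eta ->
      norm2 eta <= C0 / 2 * Rpower (INR l) (- t) * sigma_sG (2 * l)%nat (Gdiff G) eta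
                   + C1 * emax + delta) ->
   forall (x : vec n) (e : vec m), norm2 e <= emax ->
   forall xhat : vec n,
     (* xhat = Delta(Ax + e) is a minimiser of sigma_{l,G} over the feasible set *)
     norm2 (vsub (mulv A xhat) (vadd (mulv A x) e)) <= emax ->
     (forall x' : vec n, norm2 (vsub (mulv A x') (vadd (mulv A x) e)) <= emax ->
        sigma_sG l G xhat <= sigma_sG l G x') ->
     norm2 (vsub x xhat) <= C0 * Rpower (INR l) (- t) * sigma_sG l G x + C1 * emax + delta)
  /\
  (* (ii) necessity *)
  (forall Delta : vec m -> vec n,
     (forall (x : vec n) (e : vec m), norm2 e <= emax ->
        norm2 (vsub x (Delta (vadd (mulv A x) e)))
          <= C0 * Rpower (INR l) (- t) * sigma_sG l G x + C1 * emax + delta) ->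
     forall eta : vec n, in_tube A emax eta ->
       norm2 eta <= C0 * Rpower (INR l) (- t) * sigma_sG (2 * l)%nat (Gdiff G) eta
                    + 2 * C1 * emax + 2 * delta).
Proof.
have Hc : 0 <= Rpower (INR l) (- t) by rewrite /Rpower; apply: Rlt_le; apply: exp_pos.
set c := Rpower (INR l) (- t) in Hc *.
have w0 : vec k := fun _ => 0.
split.
- move=> Hsuff x e He xhat Hfeas Hmin.
  set eta := vsub x xhat.
  have Htube : in_tube A (2 * emax) eta.
  { rewrite /in_tube.
    rewrite (@norm2_ext _ _ (vsub (fun i => - vsub (mulv A xhat) (vadd (mulv A x) e) i) e));
      last by move=> i; rewrite mulv_sub /vsub /vadd; ring.
    apply: Rle_trans (norm2_sub _ _ _) _. rewrite norm2_opp. lra. }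
  have Hsx : sigma_sG l G xhat <= sigma_sG l G x.
  { apply: Hmin. rewrite (@norm2_ext _ _ (fun i => - e i)); last by move=> i; rewrite /vsub /vadd; ring.
    by rewrite norm2_opp. }
  have Hs' : sigma_sG (2 * l) (Gdiff G) eta <= sigma_sG l G x + sigma_sG l G xhat.
  { apply: approx_le => eps Heps.
    have [u [[z1 Hz1] Hu]] := sigma_approx l G w0 x (eps := eps / 2) ltac:(lra).
    have [v [[z2 Hz2] Hv]] := sigma_approx l G w0 xhat (eps := eps / 2) ltac:(lra).
    have : sigma_sG (2 * l) (Gdiff G) eta <= norm1 (vsub eta (vsub u v)).
    { apply: sigma_le. exists (z1, z2). rewrite /in_S.
      rewrite (@norm0_ext _ _ (vsub (vsub u (G z1)) (vsub v (G z2))));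
        last by move=> i; rewrite /vsub /Gdiff /= /vsub; ring.
      apply: leq_trans (norm0_sub _ _) _. rewrite /in_S in Hz1 Hz2. lia. }
    have : norm1 (vsub eta (vsub u v)) <= norm1 (vsub x u) + norm1 (vsub xhat v).
    { rewrite (@norm1_ext _ _ (vsub (vsub x u) (vsub xhat v)));
        last by move=> i; rewrite /eta /vsub; ring.
      exact: norm1_sub. }
    lra. }
  have H1 := Hsuff eta Htube.
  have : C0 / 2 * c * sigma_sG (2 * l) (Gdiff G) eta <= C0 / 2 * c * (2 * sigma_sG l G x).
  { apply: Rmult_le_compat_l; [apply: Rmult_le_pos; lra | lra]. }
  have -> : C0 * c * sigma_sG l G x = C0 / 2 * c * (2 * sigma_sG l G x) by field.
  lra.
- move=> Delta HD eta Heta.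
  set K := C0 * c.
  have HK : 0 <= K by apply: Rmult_le_pos.
  have Claim : forall w, in_SH (2 * l) (Gdiff G) w ->
      norm2 eta <= K * norm1 (vsub eta w) + 2 * C1 * emax + 2 * delta.
  { move=> w [[z1 z2] Hw]. rewrite /in_S in Hw.
    have [nu1 [nu2 [Hsum [Hn1 Hn2]]]] := @split_sparse _ _ _ Hw.
    set r := vsub eta w.
    set x1 : vec n := fun i => G z1 i + nu1 i + r i.
    set x2 : vec n := fun i => G z2 i - nu2 i.
    have Eeta : eta = vsub x1 x2.
    { apply: functional_extensionality => i. have := Hsum i.
      rewrite /x1 /x2 /r /vsub /Gdiff /= /vsub. lra. }
    set z0 : vec m := fun _ => 0.
    have Hy : vadd (mulv A x1) z0 = vadd (mulv A x2) (mulv A eta).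
    { apply: functional_extensionality => i. rewrite /vadd /z0 Eeta mulv_sub. ring. }
    have HD1 := HD x1 z0 ltac:(rewrite /z0 norm2_zero; lra).
    have HD2 := HD x2 (mulv A eta) Heta.
    rewrite -Hy in HD2.
    set d := Delta (vadd (mulv A x1) z0) in HD1 HD2.
    have Hs1 : sigma_sG l G x1 <= norm1 r.
    { rewrite (@norm1_ext _ r (vsub x1 (fun i => G z1 i + nu1 i))); last by move=> i; rewrite /x1 /vsub; ring.
      apply: sigma_le. exists z1. rewrite /in_S.
      by rewrite (@norm0_ext _ _ nu1) //; move=> i; rewrite /vsub; ring. }
    have Hs2 : sigma_sG l G x2 <= 0.
    { rewrite -(norm1_0 _ x2). apply: sigma_le. exists z2. rewrite /in_S.
      apply: leq_trans Hn2. apply: norm0_le_card => i. rewrite /x2 /vsub inE /= => h.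
      case: (Req_dec_T (nu2 i) 0) => // h'. exfalso; apply: h; rewrite h'; ring. }
    have : norm2 eta <= norm2 (vsub x1 d) + norm2 (vsub x2 d).
    { rewrite (@norm2_ext _ eta (vsub (vsub x1 d) (vsub x2 d))); last by move=> i; rewrite Eeta /vsub; ring.
      exact: norm2_sub. }
    have : K * sigma_sG l G x1 <= K * norm1 r by apply: Rmult_le_compat_l.
    have : K * sigma_sG l G x2 <= K * 0 by apply: Rmult_le_compat_l.
    rewrite /K. lra. }
  apply: approx_le => eps Heps.
  have Hq : 0 < eps / (K + 1) by apply: Rdiv_lt_0_compat; lra.
  have [w [Hw Hlt]] := sigma_approx (2 * l) (Gdiff G) (w0, w0) eta Hq.
  have := Claim w Hw.
  have : K * norm1 (vsub eta w) <= K * (sigma_sG (2 * l) (Gdiff G) eta + eps / (K + 1)).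
  { apply: Rmult_le_compat_l; lra. }
  have E : (K + 1) * (eps / (K + 1)) = eps by field; lra.
  have : K * (eps / (K + 1)) <= (K + 1) * (eps / (K + 1)) by nra.
  rewrite -/K. clearbody K. lra.
Qed.
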